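(* Under the setup, the window-coverage condition and nonsingular Gram matrix described in the context, and the DDD parallel changes-in-trends assumption, the population coefficient $\alpha_j$ ($j\in\mathcal E$) in the regression $$Y_{i,t}=\alpha_i+\delta_{S_i,t}+\eta_{Q_i,t}+\sum_{e\in\mathcal E}\alpha_eR_e(i,t)+\varepsilon_{i,t}$$ satisfies $$\alpha_j=\sum_{g\in\mathcal G_{\mathrm{trg}}}\sum_{\ell\in\{-L,\dots,K\}\setminus\{-1\}}\omega^{j,\star}_{g,\ell}\,\mathrm{CATT}(g,\ell).$$
   Context: Setup: balanced panel of units $i$ over $t\in\{1,\dots,T\}$; treatment-enabling group $S_i\in\mathcal S\subseteq\{2,\dots,T\}\cup\{\infty\}$; time-invariant eligibility $Q_i\in\{0,1\}$; $\mathcal G_{\mathrm{trg}}=\mathcal S\setminus\{\infty\}$. Potential outcomes $Y_{i,t}(g)$, $g\in\mathcal G_{\mathrm{trg}}$, and $Y_{i,t}(\infty)$, with convention $Y_{i,t}(g)=Y_{i,t}(\infty)$ for $t<g$. Observed outcome: $Y_{i,t}=Y_{i,t}(g)$ if $S_i=g\in\mathcal G_{\mathrm{trg}}$ and $Q_i=1$, and $Y_{i,t}=Y_{i,t}(\infty)$ otherwise. Data i.i.d. across units with finite second moments. $\mathrm{CATT}(g,e)=\mathbb E[Y_{i,g+e}(g)-Y_{i,g+e}(\infty)\mid S_i=g,Q_i=1]$. $\mathcal E=\{-L,\dots,K\}\setminus\{-1\}$; the window covers all event times ($t-g\in\{-L,\dots,K\}$ for all $g\in\mathcal G_{\mathrm{trg}}$,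 $t\in\{1,\dots,T\}$). $R_e(i,t)=\mathbb 1\{t-S_i=e\}Q_i$, $R_{g,\ell}(i,t)=\mathbb 1\{S_i=g,Q_i=1,t=g+\ell\}$. Population coefficients are least-squares projections over units and periods; the Gram matrix of the three-way demeaned (unit, group-by-time, eligibility-by-time) event-time indicators is nonsingular. $\omega^{j,\star}_{g,\ell}$ is the coefficient on $R_j$ in the population regression of $R_{g,\ell}(i,t)$ on $\alpha_i$, $\delta_{S_i,t}$, $\eta_{Q_i,t}$ and $\{R_e\}_{e\in\mathcal E}$. DDD-PCT: for all $g\in\mathcal G_{\mathrm{trg}}$, all $g_c\in\mathcal S$ with $g_c>g$, and all $t\in\{2,\dots,T\}$ with $t\le g_c$, writing $\Delta_t(s,q)=\mathbb E[Y_{i,t}(\infty)-Y_{i,t-1}(\infty)\mid S_i=s,Q_i=q]$, one has $\Delta_t(g,1)-\Delta_t(g,0)=\Delta_t(g_c,1)-\Delta_t(g_c,0)$. *)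

(* Defs.v *)
From HB Require Import structures.
From mathcomp Require Import all_boot all_order all_algebra.
From mathcomp Require Import all_classical all_reals all_analysis.

Set Implicit Arguments.
Unset Strict Implicit.
Unset Printing Implicit Defensive.

Import Order.TTheory GRing.Theory Num.Theory.
Local Open Scope classical_set_scope.
Local Open Scope ring_scope.

(* Conventions:
   - treatment-enabling groups are [option nat]: [Some g] is group g,
     [None] is the never-enabled group "infinity";
   - eligibility Q is a bool;
   - periods and event times are integers; periods are 1..T;
   - the population is a probability space (Omega, P): one draw = one unit
     (units are i.i.d.), and population moments are expectations under P
     summed over the periods t = 1..T. *)

Section DDD.
Context {d : measure_display} {Omega : measurableType d} {R : realType}.
Variable (P : probability Omega R).
Variables (T L K : nat) (S : Omega -> option nat) (Q : Omega -> bool).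

Definition periods : seq int := [seq (k.+1)%:Z | k <- iota 0 T].

Definition evs : seq int :=
  [seq e <- [seq (k%:Z - L%:Z) | k <- iota 0 (L + K).+1] | e != -1].

Definition Gtrg (Sset : seq (option nat)) : seq nat := undup (pmap id Sset).

Definition Re (e : int) (t : int) (w : Omega) : R :=
  if S w is Some g then ((t - g%:Z == e) && Q w)%:R else 0.

Definition Rgl (g : nat) (l : int) (t : int) (w : Omega) : R :=
  [&& S w == Some g, Q w & t == g%:Z + l]%:R.

Definition adm_fe (a : Omega -> R) : Prop := a \in Lfun P 2%:E.

Definition fefit (a : Omega -> R) (dl : option nat -> int -> R)
  (et : bool -> int -> R) : int -> Omega -> R :=
  fun t w => a w + dl (S w) t + et (Q w) t.

Definition regfit a dl et (al : int -> R) : int -> Omega -> R :=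
  fun t w => fefit a dl et t w + \sum_(e <- evs) al e * Re e t w.

Definition sqloss (Yv fit : int -> Omega -> R) : \bar R :=
  'E_P[fun w => \sum_(t <- periods) (Yv t w - fit t w) ^+ 2].

Definition pop_coef (Yv : int -> Omega -> R) (al : int -> R) : Prop :=
  exists a dl et, adm_fe a /\
    forall a' dl' et' al', adm_fe a' ->
      (sqloss Yv (regfit a dl et al) <= sqloss Yv (regfit a' dl' et' al'))%E.

Definition three_way_demeaned (Yv Yt : int -> Omega -> R) : Prop :=
  exists a dl et, adm_fe a /\
    (forall a' dl' et', adm_fe a' ->
       (sqloss Yv (fefit a dl et) <= sqloss Yv (fefit a' dl' et'))%E) /\
    forall t w, Yt t w = Yv t w - fefit a dl et t w.

Definition gram (Rt : int -> int -> Omega -> R) : 'M[R]_(size evs) :=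
  \matrix_(i, j) fine 'E_P[fun w => \sum_(t <- periods)
        Rt (nth 0 evs i) t w * Rt (nth 0 evs j) t w].

Definition gram_nonsingular : Prop :=
  exists Rt : int -> int -> Omega -> R,
    (forall e, e \in evs -> three_way_demeaned (Re e) (Rt e)) /\
    gram Rt \in unitmx.

Definition cellP (s : option nat) (q : bool) : \bar R :=
  P [set w | S w = s /\ Q w = q].

Definition condexp (X : Omega -> R) (s : option nat) (q : bool) : R :=
  fine 'E_P[fun w => X w * ((S w == s) && (Q w == q))%:R] / fine (cellP s q).

(* potential outcomes: Y (Some g) t = Y_t(g), Y None t = Y_t(infinity) *)
Definition Yobs (Y : option nat -> int -> Omega -> R) (t : int) (w : Omega) : R :=
  if S w is Some g then (if Q w then Y (Some g) t w else Y None t w)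
  else Y None t w.

Definition CATT (Y : option nat -> int -> Omega -> R) (g : nat) (e : int) : R :=
  condexp (fun w => Y (Some g) (g%:Z + e) w - Y None (g%:Z + e) w) (Some g) true.

Definition Delta (Y : option nat -> int -> Omega -> R) (t : int)
  (s : option nat) (q : bool) : R :=
  condexp (fun w => Y None t w - Y None (t - 1) w) s q.

Definition later (gc : option nat) (g : nat) : bool :=
  if gc is Some c then (g < c)%N else true.

Definition le_grp (t : int) (gc : option nat) : bool :=
  if gc is Some c then t <= c%:Z else true.

Definition DDD_PCT (Sset : seq (option nat)) (Y : option nat -> int -> Omega -> R)
  : Prop :=
  forall (g : nat) (gc : option nat) (t : int),
    g \in Gtrg Sset -> gc \in Sset -> later gc g ->
    2 <= t <= T%:Z -> le_grp t gc ->
    Delta Y t (Some g) true - Delta Y t (Some g) false =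
    Delta Y t gc true - Delta Y t gc false.

End DDD.

(* Main.v *)
Require Import Defs.
From HB Require Import structures.
From mathcomp Require Import all_boot all_order all_algebra.
From mathcomp Require Import all_classical all_reals all_analysis.
From mathcomp Require Import ring lra zify.

Import Order.TTheory GRing.Theory Num.Theory.
Local Open Scope classical_set_scope.
Local Open Scope ring_scope.

Section Gen.
Context {d : measure_display} {Omega : measurableType d} {R : realType} (P : probability Omega R).

Lemma Lp_lin {p} (p1 : (1 <= p)%E) (k : R) {f g : Omega -> R} :
  f \in Lfun P p -> g \in Lfun P p -> (fun x => k * f x + g x) \in Lfun P p.
Proof. move=> hf hg. have [_ H] := @Lfun_submod_closed _ _ _ P p p1. exact: (H k f g hf hg). Qed.

Lemma Lp_0 {p} (p1 : (1 <= p)%E) : (fun _ : Omega => 0 : R) \in Lfun P p.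
Proof. have [H _] := @Lfun_submod_closed _ _ _ P p p1. exact: H. Qed.

Lemma Lp_add {p} (p1 : (1 <= p)%E) {f g : Omega -> R} :
  f \in Lfun P p -> g \in Lfun P p -> (fun x => f x + g x) \in Lfun P p.
Proof.
move=> hf hg; have := Lp_lin p1 1 hf hg.
by rewrite (_ : (fun x => 1 * f x + g x) = (fun x => f x + g x))//; apply: funext => x; rewrite mul1r.
Qed.

Lemma Lp_scale {p} (p1 : (1 <= p)%E) (k : R) {f : Omega -> R} :
  f \in Lfun P p -> (fun x => k * f x) \in Lfun P p.
Proof.
move=> hf; have := Lp_lin p1 k hf (Lp_0 p1).
by rewrite (_ : (fun x => k * f x + 0) = (fun x => k * f x))//; apply: funext => x; rewrite addr0.
Qed.

Lemma Lp_sub {p} (p1 : (1 <= p)%E) {f g : Omega -> R} :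
  f \in Lfun P p -> g \in Lfun P p -> (fun x => f x - g x) \in Lfun P p.
Proof.
move=> hf hg; have := Lp_lin p1 (-1) hg hf.
by rewrite (_ : (fun x => -1 * g x + f x) = (fun x => f x - g x))//; apply: funext => x; rewrite mulN1r addrC.
Qed.

Lemma Lp_sum {p} (p1 : (1 <= p)%E) (I : eqType) (s : seq I) (F : I -> Omega -> R) :
  (forall i, i \in s -> F i \in Lfun P p) ->
  (fun x => \sum_(i <- s) F i x) \in Lfun P p.
Proof.
elim: s => [|i s IH] hF.
  by rewrite (_ : (fun x => _) = (fun _ => 0))//; [exact: Lp_0|apply: funext => x; rewrite big_nil].
rewrite (_ : (fun x => _) = (fun x => F i x + \sum_(j <- s) F j x)); last first.
  by apply: funext => x; rewrite big_cons.
apply: Lp_add => //; first by apply: hF; rewrite mem_head.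
by apply: IH => j js; apply: hF; rewrite inE js orbT.
Qed.

Lemma L2dom (f g : Omega -> R) : measurable_fun setT f -> g \in Lfun P 2%:E ->
  (forall x, `|f x| <= `|g x|) -> f \in Lfun P 2%:E.
Proof.
move=> mf hg fg.
move: (hg); rewrite inE => /andP[]; rewrite !inE /= => mg.
rewrite /finite_norm => l2g.
apply/andP; split; first by rewrite inE.
rewrite inE /= /finite_norm.

apply: le_lt_trans l2g.
rewrite unlock.
rewrite gt0_ler_poweR//.
- by rewrite in_itv/= leey integral_ge0.
- by rewrite in_itv/= leey integral_ge0.
- under eq_integral => x _ do rewrite (_ : `|(EFin \o f) x|%E = `|f x|%:E)// poweR_EFin.
  under [X in (_ <= X)%E]eq_integral => x _ do rewrite (_ : `|(EFin \o g) x|%E = `|g x|%:E)// poweR_EFin.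
  rewrite ge0_le_integral//.
  + apply: (proj2 (measurable_realfun.measurable_EFinP _ (fun x => `|f x| `^ 2))).
    apply: (@measurableT_comp _ _ _ _ _ _ (fun x : R => x `^ 2)) => //.
    exact: measurableT_comp.
  + apply: (proj2 (measurable_realfun.measurable_EFinP _ (fun x => `|g x| `^ 2))).
    apply: (@measurableT_comp _ _ _ _ _ _ (fun x : R => x `^ 2)) => //.
    exact: measurableT_comp.
  + move=> t _ /=. rewrite lee_fin. apply: ge0_ler_powR => //.
Qed.

Lemma p1_2 : (1 <= (2%:E : \bar R))%E.
Proof. by rewrite lee_fin ler1n. Qed.
Lemma p1_1 : (1 <= (1 : \bar R))%E.
Proof. exact: lexx. Qed.

Lemma L2bool (b : Omega -> bool) : measurable [set w | b w] ->
  (fun w => (b w)%:R : R) \in Lfun P 2%:E.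
Proof.
move=> mb.
have e : (fun w => (b w)%:R : R) = \1_[set w | b w].
  apply: funext => w.
  have hm : (w \in [set w | b w]) = b w by apply/idP/idP => [/set_mem //|h]; apply/mem_set.
  by rewrite /indic hm.
apply: (@L2dom _ (fun _ => 1)).
- by rewrite e; exact: measurable_realfun.measurable_indic.
- exact: Lfun_cst.
- by move=> w; case: (b w); rewrite ?normr1 ?normr0.
Qed.

Lemma L2mulb (b : Omega -> bool) (f : Omega -> R) : measurable [set w | b w] ->
  f \in Lfun P 2%:E -> (fun w => (b w)%:R * f w) \in Lfun P 2%:E.
Proof.
move=> mb hf.
apply: (@L2dom _ f).
- apply: measurable_realfun.measurable_funM.
  + have := @L2bool b mb; rewrite inE => /andP[]; rewrite inE //.
  + by move: hf; rewrite inE => /andP[]; rewrite inE.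
- exact: hf.
- by move=> w; case: (b w); rewrite ?mul1r ?mul0r ?normr0.
Qed.

Lemma L1prod (f g : Omega -> R) : f \in Lfun P 2%:E -> g \in Lfun P 2%:E ->
  (fun w => f w * g w) \in Lfun P 1.
Proof. exact: Lfun2_mul_Lfun1. Qed.

Definition EE (X : Omega -> R) : R := fine 'E_P[X].

Lemma EE_add (X Y : Omega -> R) : X \in Lfun P 1 -> Y \in Lfun P 1 ->
  EE (fun w => X w + Y w) = EE X + EE Y.
Proof.
move=> hX hY; rewrite /EE (expectationD hX hY) fineD//; exact: expectation_fin_num.
Qed.

Lemma EE_scale (k : R) (X : Omega -> R) : X \in Lfun P 1 ->
  EE (fun w => k * X w) = k * EE X.
Proof.
move=> hX; rewrite (_ : (fun w => k * X w) = (k \o* X)%R); last first.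
  by apply: funext => w; rewrite /= mulrC.
rewrite /EE (expectationZl _ hX) fineM//; exact: expectation_fin_num.
Qed.

Lemma EE_sub (X Y : Omega -> R) : X \in Lfun P 1 -> Y \in Lfun P 1 ->
  EE (fun w => X w - Y w) = EE X - EE Y.
Proof.
move=> hX hY.
rewrite (_ : (fun w => X w - Y w) = (fun w => X w + (-1) * Y w)); last first.
  by apply: funext => w; rewrite mulN1r.
rewrite EE_add// ?EE_scale ?mulN1r//.
exact: (Lp_scale p1_1).
Qed.

Lemma EE_sum (I : eqType) (s : seq I) (F : I -> Omega -> R) :
  (forall i, i \in s -> F i \in Lfun P 1) ->
  EE (fun w => \sum_(i <- s) F i w) = \sum_(i <- s) EE (F i).
Proof.
elim: s => [|i s IH] hF.
  rewrite big_nil (_ : (fun w => _) = cst 0); last by apply: funext => w; rewrite big_nil.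
  by rewrite /EE expectation_cst.
rewrite big_cons (_ : (fun x => _) = (fun x => F i x + \sum_(j <- s) F j x)); last first.
  by apply: funext => x; rewrite big_cons.
rewrite EE_add; first by rewrite IH// => j js; apply: hF; rewrite inE js orbT.
- by apply: hF; rewrite mem_head.
- by apply: (Lp_sum p1_1) => j js; apply: hF; rewrite inE js orbT.
Qed.

Lemma EE_ext (X Y : Omega -> R) : (forall w, X w = Y w) -> EE X = EE Y.
Proof. by move=> e; congr EE; apply: funext. Qed.

Lemma EE_ge0 (X : Omega -> R) : (forall w, 0 <= X w) -> 0 <= EE X.
Proof. by move=> h; rewrite /EE fine_ge0// expectation_ge0. Qed.

Lemma EE_cst (c : R) : EE (fun _ => c) = c.
Proof. by rewrite /EE (_ : (fun _ => c) = cst c)// expectation_cst. Qed.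

End Gen.

Section Proc.
Context {d : measure_display} {Omega : measurableType d} {R : realType} (P : probability Omega R).
Variable Tn : nat.

Definition L2p (X : int -> Omega -> R) :=
  forall t, t \in periods Tn -> X t \in Lfun P 2%:E.

Definition ip (X Z : int -> Omega -> R) : R :=
  \sum_(t <- periods Tn) EE P (fun w => X t w * Z t w).

Lemma ipC X Z : ip X Z = ip Z X.
Proof. by apply: eq_bigr => t _; apply: EE_ext => w; rewrite mulrC. Qed.

Lemma ip_ext X Z Z' : (forall t, t \in periods Tn -> forall w, Z t w = Z' t w) ->
  ip X Z = ip X Z'.
Proof.
move=> h; rewrite /ip big_seq_cond [RHS]big_seq_cond; apply: eq_bigr => t /andP[ht _].
by apply: EE_ext => w; rewrite h.
Qed.

Lemma ip_extl X X' Z : (forall t, t \in periods Tn -> forall w, X t w = X' t w) ->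
  ip X Z = ip X' Z.
Proof. by move=> h; rewrite ipC (@ip_ext Z X X' h) ipC. Qed.

Lemma L2p_lin k X Z : L2p X -> L2p Z -> L2p (fun t w => k * X t w + Z t w).
Proof. by move=> hX hZ t ht; apply: (@Lp_lin _ _ _ P _ p1_2); [apply: hX|apply: hZ]. Qed.

Lemma L2p_add X Z : L2p X -> L2p Z -> L2p (fun t w => X t w + Z t w).
Proof. by move=> hX hZ t ht; apply: (@Lp_add _ _ _ P _ p1_2); [apply: hX|apply: hZ]. Qed.

Lemma L2p_sub X Z : L2p X -> L2p Z -> L2p (fun t w => X t w - Z t w).
Proof. by move=> hX hZ t ht; apply: (@Lp_sub _ _ _ P _ p1_2); [apply: hX|apply: hZ]. Qed.

Lemma L2p_scale k X : L2p X -> L2p (fun t w => k * X t w).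
Proof. by move=> hX t ht; apply: (@Lp_scale _ _ _ P _ p1_2); apply: hX. Qed.

Lemma L2p_sum (I : eqType) (s : seq I) (F : I -> int -> Omega -> R) :
  (forall i, i \in s -> L2p (F i)) -> L2p (fun t w => \sum_(i <- s) F i t w).
Proof. by move=> hF t ht; apply: (@Lp_sum _ _ _ P _ p1_2) => i hi; apply: hF. Qed.

Lemma ip_lin k X Z1 Z2 : L2p X -> L2p Z1 -> L2p Z2 ->
  ip X (fun t w => k * Z1 t w + Z2 t w) = k * ip X Z1 + ip X Z2.
Proof.
move=> hX h1 h2; rewrite /ip mulr_sumr -big_split /= big_seq_cond [RHS]big_seq_cond.
apply: eq_bigr => t /andP[ht _].
rewrite (@EE_ext _ _ _ P _ (fun w => k * (X t w * Z1 t w) + X t w * Z2 t w)); last first.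
  by move=> w; rewrite mulrDr mulrCA.
rewrite EE_add ?EE_scale//.
- by apply: (L1prod P); [apply: hX|apply: h1].
- by apply: (@Lp_scale _ _ _ P _ p1_1); apply: (L1prod P); [apply: hX|apply: h1].
- by apply: (L1prod P); [apply: hX|apply: h2].
Qed.

Lemma ip_add X Z1 Z2 : L2p X -> L2p Z1 -> L2p Z2 ->
  ip X (fun t w => Z1 t w + Z2 t w) = ip X Z1 + ip X Z2.
Proof.
move=> hX h1 h2; rewrite -[ip X Z1]mul1r -ip_lin//.
by apply: ip_ext => t _ w; rewrite mul1r.
Qed.

Lemma ip_scale k X Z : L2p X -> L2p Z -> ip X (fun t w => k * Z t w) = k * ip X Z.
Proof.
move=> hX hZ.
have h0 : L2p (fun _ _ => 0) by move=> t _; exact: (@Lp_0 _ _ _ P _ p1_2).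
rewrite (@ip_ext X _ (fun t w => k * Z t w + 0)); last by move=> t _ w; rewrite addr0.
rewrite ip_lin// (_ : ip X (fun _ _ => 0) = 0) ?addr0//.
by rewrite /ip big1// => t _; rewrite (@EE_ext _ _ _ P _ (fun _ => 0)) ?EE_cst// => w; rewrite mulr0.
Qed.

Lemma ip_sub X Z1 Z2 : L2p X -> L2p Z1 -> L2p Z2 ->
  ip X (fun t w => Z1 t w - Z2 t w) = ip X Z1 - ip X Z2.
Proof.
move=> hX h1 h2.
rewrite (@ip_ext X _ (fun t w => (-1) * Z2 t w + Z1 t w)); last first.
  by move=> t _ w; rewrite mulN1r addrC.
by rewrite ip_lin// mulN1r addrC.
Qed.

Lemma ip_sum X (I : eqType) (s : seq I) (F : I -> int -> Omega -> R) :
  L2p X -> (forall i, i \in s -> L2p (F i)) ->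
  ip X (fun t w => \sum_(i <- s) F i t w) = \sum_(i <- s) ip X (F i).
Proof.
move=> hX; elim: s => [|i s IH] hF.
  rewrite big_nil /ip big1// => t _.
  by rewrite (@EE_ext _ _ _ P _ (fun _ => 0)) ?EE_cst// => w; rewrite big_nil mulr0.
rewrite big_cons -IH; last by move=> j js; apply: hF; rewrite inE js orbT.
rewrite -ip_add//; last by apply: L2p_sum => j js; apply: hF; rewrite inE js orbT.
- by apply: ip_ext => t _ w; rewrite big_cons.
- by apply: hF; rewrite mem_head.
Qed.

Lemma ip_ge0 X : 0 <= ip X X.
Proof. by apply: sumr_ge0 => t _; apply: EE_ge0 => w; rewrite -expr2 sqr_ge0. Qed.

Lemma loss_ip r : L2p r ->
  expectation P (fun w => \sum_(t <- periods Tn) r t w ^+ 2) = (ip r r)%:E.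
Proof.
move=> hr.
have h1 : (fun w => \sum_(t <- periods Tn) r t w ^+ 2) \in Lfun P 1.
  apply: (@Lp_sum _ _ _ P _ p1_1) => t ht.
  rewrite (_ : (fun w => r t w ^+ 2) = (fun w => r t w * r t w)); last first.
    by apply: funext => w; rewrite expr2.
  by apply: (L1prod P); apply: hr.
rewrite -(fineK (expectation_fin_num h1)).
congr (_%:E); rewrite -/(EE P _) /ip EE_sum.
  by apply: eq_bigr => t _; apply: EE_ext => w; rewrite expr2.
move=> t ht.
rewrite (_ : (fun w => r t w ^+ 2) = (fun w => r t w * r t w)); last first.
  by apply: funext => w; rewrite expr2.
by apply: (L1prod P); apply: hr.
Qed.

Lemma FOC r h : L2p r -> L2p h ->
  (forall s : R, (expectation P (fun w => (\sum_(t <- periods Tn) r t w ^+ 2)%R) <=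
                 expectation P (fun w => (\sum_(t <- periods Tn) (r t w - s * h t w) ^+ 2)%R))%E) ->
  ip r h = 0.
Proof.
move=> hr hh H.
set A := ip r h; set B := ip h h.
have B0 : 0 <= B by apply: ip_ge0.
have key : forall s, 0 <= s ^+ 2 * B - 2 * s * A.
  move=> s; have := H s.
  have hsh : L2p (fun t w => s * h t w) by apply: L2p_scale.
  have hrs : L2p (fun t w => r t w - s * h t w) by apply: L2p_sub.
  rewrite loss_ip// loss_ip// lee_fin.
  have e1 : ip (fun t w => r t w - s * h t w) r = ip r r - s * A.
    by rewrite ipC ip_sub// ip_scale.
  have e2 : ip (fun t w => r t w - s * h t w) h = A - s * B.
    by rewrite ipC ip_sub// ip_scale// [ip h r]ipC.
  rewrite ip_sub// ip_scale// e1 e2 => hle.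
  by rewrite -subr_ge0 in hle; rewrite (le_trans hle)// le_eqVlt; apply/orP; left; apply/eqP; ring.
pose s := A / (B + 1).
have hB1 : B + 1 != 0 by rewrite gt_eqF// ltr_pwDr.
have hs : s * (B + 1) = A by rewrite /s divfK.
have := key s.
rewrite -hs => k2.
have : s ^+ 2 * (B + 2) <= 0.
  by rewrite -oppr_ge0; apply: le_trans k2 _; rewrite le_eqVlt; apply/orP; left; apply/eqP; ring.
move=> k3.
have s0 : s = 0.
  apply/eqP; rewrite -sqrf_eq0; apply/eqP/le_anti/andP; split; last exact: sqr_ge0.
  have hB2 : 0 < B + 2 by rewrite ltr_pwDr.
  have s20 : 0 <= s ^+ 2 by exact: sqr_ge0.
  nra.
by rewrite s0 mul0r.
Qed.

End Proc.

Section Combi.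
Context {R : realType}.

Lemma mem_periods (Tn : nat) (t : int) : (t \in periods Tn) = (1 <= t <= Tn%:Z).
Proof.
apply/mapP/idP => [[k hk ->]|].
  by move: hk; rewrite mem_iota add0n => hk; apply/andP; split; lia.
case: t => [n|n] /andP[h1 h2]; last by [].
exists n.-1; first by rewrite mem_iota add0n; lia.
by congr Posz; lia.
Qed.

Lemma mem_evs (L K : nat) (x : int) :
  (x \in evs L K) = [&& - (L%:Z) <= x, x <= K%:Z & x != -1].
Proof.
rewrite mem_filter.
have -> : (x \in [seq k%:Z - L%:Z | k <- iota 0 (L + K).+1]) = (- (L%:Z) <= x <= K%:Z).
  apply/mapP/idP => [[k hk ->]|].
    by move: hk; rewrite mem_iota add0n => hk; apply/andP; split; lia.
  move=> /andP[h1 h2]; exists (absz (x + L%:Z)).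
    by rewrite mem_iota add0n; lia.
  lia.
by rewrite andbC -andbA.
Qed.

Lemma uniq_evs (L K : nat) : uniq (evs L K).
Proof.
rewrite filter_uniq// map_inj_uniq ?iota_uniq// => a b /eqP.
by rewrite subr_eq subrK => /eqP[].
Qed.

Lemma uniq_periods (Tn : nat) : uniq (periods Tn).
Proof. by rewrite map_inj_uniq ?iota_uniq// => a b []. Qed.

Lemma size_periods (Tn : nat) : size (periods Tn) = Tn.
Proof. by rewrite size_map size_iota. Qed.

Lemma uniq_Gtrg (s : seq (option nat)) : uniq (Gtrg s).
Proof. exact: undup_uniq. Qed.

Lemma mem_Gtrg (s : seq (option nat)) g : (g \in Gtrg s) = (Some g \in s).
Proof. by rewrite /Gtrg mem_undup mem_pmap map_id. Qed.

Lemma sum_ind (T : eqType) (s : seq T) (x : T) (F : T -> R) : uniq s ->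
  \sum_(y <- s) (x == y)%:R * F y = (x \in s)%:R * F x.
Proof.
elim: s => [|y s IH]; first by rewrite big_nil in_nil mul0r.
rewrite cons_uniq => /andP[ys us]; rewrite big_cons IH// in_cons.
case: eqP => [->|_]; last by rewrite mul0r add0r.
by rewrite (negbTE ys) mul0r addr0.
Qed.

Lemma sum_const_seq (T : Type) (s : seq T) (c : R) :
  \sum_(i <- s) c = c *+ size s.
Proof. by elim: s => [|x s IH]; rewrite ?big_nil ?mulr0n// big_cons IH mulrS. Qed.

End Combi.

Section Model.
Context {d : measure_display} {Omega : measurableType d} {R : realType}
  (P : probability Omega R) (Tn L K : nat)
  (S : Omega -> option nat) (Q : Omega -> bool) (Sset : seq (option nat))
  (hS : forall w, S w \in Sset)
  (hcm : forall s q, measurable [set w | S w = s /\ Q w = q]).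

Definition cellb s q w := (S w == s) && (Q w == q).

Lemma mcell s q : measurable [set w | cellb s q w].
Proof.
rewrite (_ : [set w | cellb s q w] = [set w | S w = s /\ Q w = q]); first exact: hcm.
apply/seteqP; split => w /=.
  by move=> /andP[/eqP h1 /eqP h2].
by move=> [h1 h2]; rewrite /cellb h1 h2 !eqxx.
Qed.

Lemma cell_decomp (f : option nat -> bool -> R) w :
  f (S w) (Q w) = \sum_(s <- undup Sset) \sum_(q <- [:: true; false])
     f s q * (cellb s q w)%:R.
Proof.
rewrite (eq_bigr (fun s => (S w == s)%:R * f s (Q w))); last first.
  move=> s _.
  rewrite (eq_bigr (fun q => (Q w == q)%:R * ((S w == s)%:R * f s q))); last first.
    by move=> q _; rewrite /cellb; case: (S w == s); case: (Q w == q); rewrite /= ?mul0r ?mul1r ?mulr0 ?mulr1.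
  rewrite sum_ind//.
  have -> : (Q w \in [:: true; false]) by case: (Q w).
  by rewrite mul1r.
by rewrite sum_ind ?undup_uniq// mem_undup hS mul1r.
Qed.

Lemma L2cellmul (f : option nat -> bool -> R) (X : Omega -> R) :
  X \in Lfun P 2%:E -> (fun w => f (S w) (Q w) * X w) \in Lfun P 2%:E.
Proof.
move=> hX.
rewrite (_ : (fun w => _) = (fun w => \sum_(s <- undup Sset) \sum_(q <- [:: true; false])
     f s q * ((cellb s q w)%:R * X w))); last first.
  apply: funext => w; rewrite (cell_decomp f w) mulr_suml; apply: eq_bigr => s _.
  by rewrite mulr_suml; apply: eq_bigr => q _; rewrite mulrA.
apply: (Lp_sum P p1_2) => s _; apply: (Lp_sum P p1_2) => q _.
apply: (Lp_scale P p1_2); exact: L2mulb (mcell s q) hX.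
Qed.

Lemma L2cell (f : option nat -> bool -> R) :
  (fun w => f (S w) (Q w)) \in Lfun P 2%:E.
Proof.
have := @L2cellmul f (cst 1) (Lfun_cst P 1 2).
by rewrite (_ : (fun w => _) = (fun w => f (S w) (Q w)))//; apply: funext => w; rewrite mulr1.
Qed.

Lemma L1cellb s q (X : Omega -> R) : X \in Lfun P 2%:E ->
  (fun w => (cellb s q w)%:R * X w) \in Lfun P 1.
Proof. move=> hX; apply: (L1prod P) => //; exact: L2bool (mcell s q). Qed.

Lemma EE_cellmul (f : option nat -> bool -> R) (X : Omega -> R) :
  X \in Lfun P 2%:E ->
  EE P (fun w => f (S w) (Q w) * X w) = \sum_(s <- undup Sset) \sum_(q <- [:: true; false])
     f s q * EE P (fun w => (cellb s q w)%:R * X w).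
Proof.
move=> hX.
rewrite (@EE_ext _ _ _ P _ (fun w => \sum_(s <- undup Sset) \sum_(q <- [:: true; false])
     f s q * ((cellb s q w)%:R * X w))); last first.
  move=> w; rewrite (cell_decomp f w) mulr_suml; apply: eq_bigr => s _.
  by rewrite mulr_suml; apply: eq_bigr => q _; rewrite mulrA.
rewrite EE_sum; last first.
  move=> s _; apply: (Lp_sum P p1_1) => q _; apply: (Lp_scale P p1_1).
  exact: L1cellb.
apply: eq_bigr => s _; rewrite EE_sum; last first.
  by move=> q _; apply: (Lp_scale P p1_1); exact: L1cellb.
by apply: eq_bigr => q _; rewrite EE_scale//; exact: L1cellb.
Qed.

Lemma L2p_ext (X X' : int -> Omega -> R) : L2p P Tn X' ->
  (forall t, t \in periods Tn -> forall w, X t w = X' t w) -> L2p P Tn X.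
Proof.
move=> hX' e t ht; rewrite (_ : X t = X' t); first exact: hX'.
by apply: funext => w; rewrite e.
Qed.

Lemma L2p_cell (F : option nat -> bool -> int -> R) :
  L2p P Tn (fun t w => F (S w) (Q w) t).
Proof. by move=> t _; exact: (L2cell (fun s q => F s q t)). Qed.

Lemma L2p_Re (e : int) : L2p P Tn (Defs.Re S Q e).
Proof.
refine (@L2p_ext (Defs.Re S Q e) _ (L2p_cell (fun (s : option nat) (q : bool) (t : int) => if s is Some g then ((t - g%:Z == e) && q)%:R else 0 : R)) _).
by move=> t _ w; rewrite /Defs.Re; case: (S w).
Qed.

Lemma L2p_Rgl (g : nat) (l : int) : L2p P Tn (Rgl S Q g l).
Proof.
refine (@L2p_ext (Rgl S Q g l) _ (L2p_cell (fun (s : option nat) (q : bool) (t : int) => [&& s == Some g, q & t == g%:Z + l]%:R : R)) _).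
by move=> t _ w; rewrite /Rgl.
Qed.

Lemma L2p_fefit a dl et : a \in Lfun P 2%:E -> L2p P Tn (fefit S Q a dl et).
Proof.
move=> ha t _; rewrite /fefit.
apply: (Lp_add P p1_2); last exact: (L2cell (fun s q => et q t)).
apply: (Lp_add P p1_2) => //; exact: (L2cell (fun s q => dl s t)).
Qed.

Lemma L2p_regfit a dl et al : a \in Lfun P 2%:E ->
  L2p P Tn (regfit L K S Q a dl et al).
Proof.
move=> ha t ht; rewrite /regfit.
apply: (Lp_add P p1_2); first exact: L2p_fefit.
apply: (Lp_sum P p1_2) => e _; apply: (Lp_scale P p1_2); exact: L2p_Re.
Qed.




Lemma adm_lin {a a' : Omega -> R} (s : R) : adm_fe P a -> adm_fe P a' ->
  adm_fe P (fun w => a w + s * a' w).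
Proof. by move=> ha ha'; apply: (Lp_add P p1_2) => //; apply: (Lp_scale P p1_2). Qed.

Lemma fefit_lin (a a' : Omega -> R) dl dl' et et' (s : R) t w :
  fefit S Q (fun w => a w + s * a' w) (fun x t => dl x t + s * dl' x t)
    (fun q t => et q t + s * et' q t) t w =
  fefit S Q a dl et t w + s * fefit S Q a' dl' et' t w.
Proof. rewrite /fefit; ring. Qed.

Lemma regfit_lin (a a' : Omega -> R) dl dl' et et' al al' (s : R) t w :
  regfit L K S Q (fun w => a w + s * a' w) (fun x t => dl x t + s * dl' x t)
    (fun q t => et q t + s * et' q t) (fun e => al e + s * al' e) t w =
  regfit L K S Q a dl et al t w + s * regfit L K S Q a' dl' et' al' t w.
Proof.
rewrite /regfit fefit_lin.
rewrite (eq_bigr (fun e => al e * Defs.Re S Q e t w + s * (al' e * Defs.Re S Q e t w))); last first.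
  by move=> e _; ring.
rewrite big_split -mulr_sumr /=; ring.
Qed.

Lemma popFOC (Yv : int -> Omega -> R) al : L2p P Tn Yv ->
  pop_coef P Tn L K S Q Yv al ->
  exists a dl et, adm_fe P a /\ forall a' dl' et' al', adm_fe P a' ->
   ip P Tn (fun t w => Yv t w - regfit L K S Q a dl et al t w)
     (regfit L K S Q a' dl' et' al') = 0.
Proof.
move=> hY [a [dl [et [ha H]]]]; exists a, dl, et; split => // a' dl' et' al' ha'.
apply: FOC.
- by apply: L2p_sub => //; apply: L2p_regfit.
- exact: L2p_regfit.
move=> s.
have := H (fun w => a w + s * a' w) (fun x t => dl x t + s * dl' x t)
  (fun q t => et q t + s * et' q t) (fun e => al e + s * al' e) (adm_lin s ha ha').
rewrite /sqloss.
congr (_ <= expectation P _)%E.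
apply: funext => w; apply: eq_bigr => t _; rewrite regfit_lin; congr (_ ^+ 2); ring.
Qed.

Lemma demeanFOC (Yv Yt : int -> Omega -> R) : L2p P Tn Yv ->
  three_way_demeaned P Tn S Q Yv Yt ->
  exists a dl et, adm_fe P a /\ (forall t w, Yt t w = Yv t w - fefit S Q a dl et t w) /\
   forall a' dl' et', adm_fe P a' -> ip P Tn Yt (fefit S Q a' dl' et') = 0.
Proof.
move=> hY [a [dl [et [ha [H E]]]]]; exists a, dl, et; split => //; split => // a' dl' et' ha'.
rewrite (@ip_extl _ _ _ P Tn Yt (fun t w => Yv t w - fefit S Q a dl et t w)); last first.
  by move=> t _ w; rewrite E.
apply: FOC.
- by apply: L2p_sub => //; apply: L2p_fefit.
- exact: L2p_fefit.
move=> s.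
have := H (fun w => a w + s * a' w) (fun x t => dl x t + s * dl' x t)
  (fun q t => et q t + s * et' q t) (adm_lin s ha ha').
rewrite /sqloss.
congr (_ <= expectation P _)%E.
apply: funext => w; apply: eq_bigr => t _; rewrite fefit_lin; congr (_ ^+ 2); ring.
Qed.




Lemma rep_lemma (X : int -> Omega -> R) (F : option nat -> bool -> int -> R)
    (a : Omega -> R) :
  adm_fe P a -> (forall t w, X t w = F (S w) (Q w) t - a w) ->
  (forall a', adm_fe P a' -> ip P Tn X (fun t w => a' w) = 0) ->
  exists rho : option nat -> bool -> int -> R, forall Z, L2p P Tn Z ->
    ip P Tn X Z = \sum_(t <- periods Tn) EE P (fun w => rho (S w) (Q w) t * Z t w).
Proof.
move=> ha Xe Horth.
case: (posnP Tn) => [Tn0|Tn_gt0].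
  by exists F => Z _; rewrite /ip Tn0 /periods /= !big_nil.
have Tn0 : Tn%:R != 0 :> R by rewrite pnatr_eq0 -lt0n.
pose phi s q := Tn%:R^-1 * \sum_(t <- periods Tn) F s q t.
exists (fun s q t => F s q t - phi s q) => Z hZ.
pose u w := phi (S w) (Q w) - a w.
have hu : u \in Lfun P 2%:E by apply: (Lp_sub P p1_2) => //; exact: (L2cell phi).
have L2X : L2p P Tn X.
  apply: (@L2p_ext X (fun t w => F (S w) (Q w) t - a w)); last by move=> t _ w; rewrite Xe.
  by apply: L2p_sub; [exact: (L2p_cell F)|move=> t _].
have ue : forall w, u w = Tn%:R^-1 * \sum_(s <- periods Tn) X s w.
  move=> w; rewrite (eq_bigr (fun s => F (S w) (Q w) s - a w)); last by move=> s _; rewrite Xe.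
  rewrite sumrB sum_const_seq size_periods /u /phi -mulr_natr.
  by field.
have L2rho : L2p P Tn (fun t w => F (S w) (Q w) t - phi (S w) (Q w)).
  exact: (L2p_cell (fun s q t => F s q t - phi s q)).
have L2u : L2p P Tn (fun t w => u w) by move=> t _.
have hSZ : (fun w => \sum_(t <- periods Tn) Z t w) \in Lfun P 2%:E.
  by apply: (Lp_sum P p1_2) => t ht; apply: hZ.
rewrite (@ip_extl _ _ _ P Tn X (fun t w => (F (S w) (Q w) t - phi (S w) (Q w)) + u w)); last first.
  by move=> t _ w; rewrite Xe /u; ring.
rewrite ipC ip_add// ipC.
have -> : ip P Tn Z (fun t w => u w) = 0.
  have -> : ip P Tn Z (fun t w => u w) =
      Tn%:R^-1 * ip P Tn X (fun t w => \sum_(t' <- periods Tn) Z t' w).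
    rewrite /ip -EE_sum; last by move=> t ht; apply: (L1prod P); [apply: hZ|].
    rewrite -EE_sum; last by move=> t ht; apply: (L1prod P) => //; apply: L2X.
    rewrite -EE_scale; last first.
      by apply: (Lp_sum P p1_1) => t ht; apply: (L1prod P) => //; apply: L2X.
    apply: EE_ext => w; rewrite -mulr_suml -mulr_suml ue; ring.
  by rewrite Horth ?mulr0.
by rewrite addr0.
Qed.


Lemma demean_facts (Rt : int -> int -> Omega -> R) e :
  three_way_demeaned P Tn S Q (Defs.Re S Q e) (Rt e) ->
  exists a dl et, adm_fe P a /\
    (forall t w, Rt e t w = Defs.Re S Q e t w - fefit S Q a dl et t w) /\
    (forall a' dl' et', adm_fe P a' -> ip P Tn (Rt e) (fefit S Q a' dl' et') = 0) /\
    L2p P Tn (Rt e).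
Proof.
move=> hd; have [a [dl [et [ha [E O]]]]] := @demeanFOC _ _ (L2p_Re e) hd.
exists a, dl, et; split => //; split => //; split => //.
apply: (@L2p_ext (Rt e) (fun t w => Defs.Re S Q e t w - fefit S Q a dl et t w)); last first.
  by move=> t _ w; rewrite E.
by apply: L2p_sub; [exact: L2p_Re|exact: L2p_fefit].
Qed.

Lemma gram_rel (Rt : int -> int -> Omega -> R) (Yv : int -> Omega -> R) al i :
  (forall e, e \in evs L K -> three_way_demeaned P Tn S Q (Defs.Re S Q e) (Rt e)) ->
  L2p P Tn Yv -> pop_coef P Tn L K S Q Yv al -> i \in evs L K ->
  ip P Tn (Rt i) Yv = \sum_(e <- evs L K) al e * ip P Tn (Rt i) (Rt e).
Proof.
move=> hRt hY hal hi.
have [ai [dli [eti [hai [Ei [Oi Li]]]]]] := @demean_facts Rt i (hRt i hi).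
have [a [dl [et [ha H]]]] := @popFOC _ _ hY hal.
have hai' : adm_fe P (fun w => - ai w).
  rewrite (_ : (fun w => - ai w) = (fun w => (-1) * ai w)); last first.
    by apply: funext => w; rewrite mulN1r.
  exact: (Lp_scale P p1_2).
have hr := H _ (fun x t => - dli x t) (fun q t => - eti q t) (fun e => (e == i)%:R) hai'.
set r := (fun t w => Yv t w - regfit L K S Q a dl et al t w) in hr.
have Lr : L2p P Tn r by apply: L2p_sub => //; exact: L2p_regfit.
have hr0 : ip P Tn r (Rt i) = 0.
  rewrite -hr; apply: ip_ext => t _ w.
  rewrite Ei /regfit /fefit.
  rewrite (eq_bigr (fun e => (i == e)%:R * Defs.Re S Q e t w)); last first.
    by move=> e _; rewrite eq_sym.
  by rewrite sum_ind ?uniq_evs// hi mul1r; ring.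
have LR := L2p_regfit a dl et al ha.
rewrite (@ip_ext _ _ _ P Tn (Rt i) Yv (fun t w => regfit L K S Q a dl et al t w + r t w)); last first.
  by move=> t _ w; rewrite /r; ring.
rewrite ip_add// [ip P Tn (Rt i) r]ipC hr0 addr0.
rewrite /regfit ip_add//; last first.
- apply: L2p_sum => e _; apply: L2p_scale; exact: L2p_Re.
- exact: L2p_fefit.
rewrite Oi// add0r ip_sum//; last by move=> e _; apply: L2p_scale; exact: L2p_Re.
rewrite big_seq_cond [RHS]big_seq_cond; apply: eq_bigr => e /andP[he _].
rewrite ip_scale//; last exact: L2p_Re.
have [ae [dle [ete [hae [Ee [Oe Le]]]]]] := @demean_facts Rt e (hRt e he).
rewrite (@ip_ext _ _ _ P Tn (Rt i) (Defs.Re S Q e) (fun t w => Rt e t w + fefit S Q ae dle ete t w)); last first.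
  by move=> t _ w; rewrite Ee; ring.
by rewrite ip_add// ?Oi ?addr0//; exact: L2p_fefit.
Qed.

Lemma gram_ip (Rt : int -> int -> Omega -> R) (i j : 'I_(size (evs L K))) :
  (forall e, e \in evs L K -> L2p P Tn (Rt e)) ->
  gram P Tn L K Rt i j = ip P Tn (Rt (nth 0 (evs L K) i)) (Rt (nth 0 (evs L K) j)).
Proof.
move=> hL; rewrite /gram mxE -/(EE P _) EE_sum// => t ht.
by apply: (L1prod P); apply: hL => //; apply: mem_nth.
Qed.

Lemma gram_solve (Rt : int -> int -> Omega -> R) (c : int -> R) :
  gram P Tn L K Rt \in unitmx ->
  (forall e, e \in evs L K -> L2p P Tn (Rt e)) ->
  (forall i, i \in evs L K -> \sum_(e <- evs L K) c e * ip P Tn (Rt i) (Rt e) = 0) ->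
  forall j, j \in evs L K -> c j = 0.
Proof.
move=> hU hL hc j hj.
pose v : 'cV[R]_(size (evs L K)) := \col_k c (nth 0 (evs L K) k).
have Gv : gram P Tn L K Rt *m v = 0.
  apply/matrixP => k z; rewrite !mxE.
  rewrite -[RHS](hc (nth 0 (evs L K) k) (mem_nth 0 (ltn_ord k))).
  rewrite (big_nth 0) big_mkord; apply: eq_bigr => k' _.
  by rewrite gram_ip// !mxE mulrC.
have v0 : v = 0 by rewrite -(mulKmx hU v) Gv mulmx0.
have hk : (index j (evs L K) < size (evs L K))%N by rewrite index_mem.
have := congr1 (fun M : 'cV[R]_(size (evs L K)) => M (Ordinal hk) 0) v0.
by rewrite !mxE /= nth_index.
Qed.

Lemma cellb_indic s q w :
  ((cellb s q w)%:R : R) = \1_[set w | S w = s /\ Q w = q] w.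
Proof.
have hm : (w \in [set w | S w = s /\ Q w = q]) = cellb s q w.
  apply/idP/idP => [/set_mem [h1 h2]|/andP[/eqP h1 /eqP h2]].
    by rewrite /cellb h1 h2 !eqxx.
  exact/mem_set.
by rewrite /indic hm.
Qed.

Lemma EE_cellb s q : EE P (fun w => (cellb s q w)%:R) = fine (cellP P S Q s q).
Proof.
rewrite /EE (_ : (fun w => _) = \1_[set w | S w = s /\ Q w = q]); last first.
  by apply: funext => w; rewrite cellb_indic.
by rewrite expectation_indic.
Qed.

Lemma cellP_pos s q : (0 < cellP P S Q s q)%E -> 0 < fine (cellP P S Q s q).
Proof.
move=> h; apply: fine_gt0; rewrite h /=.
by apply: (le_lt_trans (probability_le1 P (hcm s q))); rewrite ltry.
Qed.

Lemma condexp_sub (X Y : Omega -> R) s q : X \in Lfun P 2%:E -> Y \in Lfun P 2%:E ->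
  condexp P S Q (fun w => X w - Y w) s q = condexp P S Q X s q - condexp P S Q Y s q.
Proof.
move=> hX hY; rewrite /condexp -!/(EE P _) -mulrBl; congr (_ / _).
rewrite (@EE_ext _ _ _ P _ (fun w => X w * (cellb s q w)%:R - Y w * (cellb s q w)%:R)); last first.
  by move=> w; rewrite /cellb mulrBl.
by rewrite EE_sub//; apply: (L1prod P) => //; exact: L2bool (mcell s q).
Qed.

Lemma condexp_cell (Z : Omega -> R) s q : (0 < cellP P S Q s q)%E ->
  condexp P S Q Z s q * fine (cellP P S Q s q) = EE P (fun w => (cellb s q w)%:R * Z w).
Proof.
move=> hp; rewrite /condexp -/(EE P _) divfK; last by rewrite gt_eqF// cellP_pos.
by apply: EE_ext => w; rewrite mulrC.
Qed.

Lemma cell_replace (hpos : forall s q, s \in Sset -> (0 < cellP P S Q s q)%E)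
    (f : option nat -> bool -> R) (Z : Omega -> R) :
  Z \in Lfun P 2%:E ->
  EE P (fun w => f (S w) (Q w) * Z w) =
  EE P (fun w => f (S w) (Q w) * condexp P S Q Z (S w) (Q w)).
Proof.
move=> hZ.
rewrite EE_cellmul//.
rewrite (@EE_ext _ _ _ P _ (fun w => (fun s q => f s q * condexp P S Q Z s q) (S w) (Q w) * cst 1 w)); last first.
  by move=> w; rewrite /= mulr1.
rewrite (@EE_cellmul (fun s q => f s q * condexp P S Q Z s q) (cst 1) (Lfun_cst P 1 2)).
rewrite big_seq_cond [RHS]big_seq_cond; apply: eq_bigr => s /andP[hs _].
apply: eq_bigr => q _.
rewrite (@EE_ext _ _ _ P (fun w => (cellb s q w)%:R * cst 1 w) (fun w => (cellb s q w)%:R)); last first.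
  by move=> w; rewrite /= mulr1.
rewrite EE_cellb -mulrA condexp_cell//.
by apply: hpos; rewrite -mem_undup.
Qed.

Definition mY (Y : option nat -> int -> Omega -> R) s q t :=
  condexp P S Q (Y None t) s q.
Definition kk Y s t := mY Y s true t - mY Y s false t - mY Y None true t + mY Y None false t.

Lemma kk_step (Y : option nat -> int -> Omega -> R)
  (hYinf : forall t, t \in periods Tn -> Y None t \in Lfun P 2%:E)
  (hN : None \in Sset) (hpct : DDD_PCT P Tn S Q Sset Y) s t :
  s \in Sset -> 2 <= t <= Tn%:Z -> kk Y s t = kk Y s (t - 1).
Proof.
move=> hs ht; case: s hs => [g|] hs; last by rewrite /kk; ring.
have hg : g \in Gtrg Sset by rewrite mem_Gtrg.
have := hpct g None t hg hN erefl ht erefl.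
move: ht => /andP[ht1 ht2].
have h1 : Y None t \in Lfun P 2%:E by apply: hYinf; rewrite mem_periods; apply/andP; split; lia.
have h2 : Y None (t - 1) \in Lfun P 2%:E by apply: hYinf; rewrite mem_periods; apply/andP; split; lia.
rewrite /Delta !condexp_sub// /kk /mY => E.
lra.
Qed.

Lemma kk_const (Y : option nat -> int -> Omega -> R)
  (hYinf : forall t, t \in periods Tn -> Y None t \in Lfun P 2%:E)
  (hN : None \in Sset) (hpct : DDD_PCT P Tn S Q Sset Y) s (n : nat) :
  s \in Sset -> (1 <= n <= Tn)%N -> kk Y s n%:Z = kk Y s 1.
Proof.
move=> hs; elim: n => [//|n IH] hn.
case: n IH hn => [//|n] IH hn.
rewrite (@kk_step Y hYinf hN hpct s _ hs); last by apply/andP; split; lia.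
have -> : (n.+2)%:Z - 1 = (n.+1)%:Z by lia.
by apply: IH; lia.
Qed.

Lemma mdecomp (Y : option nat -> int -> Omega -> R)
  (hYinf : forall t, t \in periods Tn -> Y None t \in Lfun P 2%:E)
  (hN : None \in Sset) (hpct : DDD_PCT P Tn S Q Sset Y) s q t :
  s \in Sset -> t \in periods Tn ->
  mY Y s q t = (if q then kk Y s 1 else 0) + mY Y s false t +
     (if q then mY Y None true t - mY Y None false t else 0).
Proof.
move=> hs; rewrite mem_periods; case: t => [n|n] ht; last by [].
case: q; last by rewrite add0r addr0.
rewrite -(@kk_const Y hYinf hN hpct s n hs); last by lia.
rewrite /kk; ring.
Qed.

Lemma rep_Rt (Rt : int -> int -> Omega -> R) i :
  three_way_demeaned P Tn S Q (Defs.Re S Q i) (Rt i) ->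
  exists rho : option nat -> bool -> int -> R, forall Z, L2p P Tn Z ->
    ip P Tn (Rt i) Z = \sum_(t <- periods Tn) EE P (fun w => rho (S w) (Q w) t * Z t w).
Proof.
move=> hd; have [ai [dli [eti [hai [Ei [Oi Li]]]]]] := @demean_facts Rt i hd.
apply: (@rep_lemma (Rt i)
  (fun s q t => (if s is Some g then ((t - g%:Z == i) && q)%:R else 0) - dli s t - eti q t) ai hai).
- by move=> t w; rewrite Ei /Defs.Re /fefit; case: (S w) => [g|]; ring.
- move=> a' ha'; rewrite -(Oi a' (fun _ _ => 0) (fun _ _ => 0) ha').
  by apply: ip_ext => t _ w; rewrite /fefit !addr0.
Qed.

Lemma ipYinf_zero (Y : option nat -> int -> Omega -> R)
  (hYinf : forall t, t \in periods Tn -> Y None t \in Lfun P 2%:E)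
  (hN : None \in Sset) (hpct : DDD_PCT P Tn S Q Sset Y)
  (hpos : forall s q, s \in Sset -> (0 < cellP P S Q s q)%E)
  (Rt : int -> int -> Omega -> R) i :
  three_way_demeaned P Tn S Q (Defs.Re S Q i) (Rt i) ->
  ip P Tn (Rt i) (Y None) = 0.
Proof.
move=> hd; have [ai [dli [eti [hai [Ei [Oi Li]]]]]] := @demean_facts Rt i hd.
have [rho Hr] := @rep_Rt Rt i hd.
have LY : L2p P Tn (Y None) by move=> t ht; apply: hYinf.
have Lm : L2p P Tn (fun t w => mY Y (S w) (Q w) t) by exact: (L2p_cell (fun s q t => mY Y s q t)).
rewrite Hr//.
rewrite (_ : \sum_(t <- periods Tn) _ =
   \sum_(t <- periods Tn) EE P (fun w => rho (S w) (Q w) t * mY Y (S w) (Q w) t)); last first.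
  rewrite big_seq_cond [RHS]big_seq_cond; apply: eq_bigr => t /andP[ht _].
  by rewrite (@cell_replace hpos (fun s q => rho s q t) (Y None t) (hYinf t ht)).
rewrite -(Hr (fun t w => mY Y (S w) (Q w) t) Lm).
rewrite (@ip_ext _ _ _ P Tn (Rt i) _ (fefit S Q (fun w => if Q w then kk Y (S w) 1 else 0)
   (fun s t => mY Y s false t) (fun q t => if q then mY Y None true t - mY Y None false t else 0))).
  apply: Oi; exact: (L2cell (fun s q => if q then kk Y s 1 else 0)).
by move=> t ht w; rewrite /fefit (@mdecomp Y hYinf hN hpct).
Qed.

Definition Xg (Y : option nat -> int -> Omega -> R) g l w :=
  Y (Some g) (g%:Z + l) w - Y None (g%:Z + l) w.

Lemma eq_Some (a b : nat) : (Some a == Some b) = (a == b).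
Proof. by apply/eqP/eqP => [[]|->]. Qed.

Lemma Yobs_dec (Y : option nat -> int -> Omega -> R)
  (hconv : forall g t w, Some g \in Sset -> t \in periods Tn -> t < g%:Z ->
           Y (Some g) t w = Y None t w)
  (hwin : forall g t, g \in Gtrg Sset -> t \in periods Tn ->
           - (L%:Z) <= t - g%:Z <= K%:Z) t w :
  t \in periods Tn ->
  Yobs S Q Y t w = Y None t w +
    \sum_(g <- Gtrg Sset) \sum_(l <- evs L K) Rgl S Q g l t w * Xg Y g l w.
Proof.
move=> ht; rewrite /Yobs /Rgl.
have hSw := hS w.
case hs: (S w) => [g0|]; last first.
  by rewrite big1 ?addr0// => g _; rewrite big1// => l _; rewrite /= mul0r.
case hQ: (Q w); last first.
  by rewrite big1 ?addr0// => g _; rewrite big1// => l _; rewrite /= andbF mul0r.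
have hg0 : g0 \in Gtrg Sset by rewrite mem_Gtrg -hs.
rewrite (eq_bigr (fun g => (g0 == g)%:R * \sum_(l <- evs L K) (t - g0%:Z == l)%:R * Xg Y g0 l w)); last first.
  move=> g _; rewrite eq_Some; case: (eqVneq g0 g) => [<-|ne].
    rewrite mul1r; apply: eq_bigr => l _; rewrite /=.
    by rewrite subr_eq addrC.
  by rewrite mul0r big1// => l _; rewrite /= mul0r.
rewrite sum_ind ?uniq_Gtrg// hg0 mul1r sum_ind ?uniq_evs//.
rewrite /Xg [g0%:Z + _]addrC subrK.
case: (boolP (t - g0%:Z \in evs L K)) => hin.
  by rewrite mul1r; ring.
rewrite mul0r addr0; apply: hconv => //; first by rewrite -hs.
have := hwin g0 t hg0 ht; move: hin; rewrite mem_evs => + /andP[h1 h2].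
by rewrite h1 h2 /= => /negPn/eqP e; lia.
Qed.

Lemma L2p_RglX (Y : option nat -> int -> Omega -> R) g l :
  (g%:Z + l \in periods Tn -> Xg Y g l \in Lfun P 2%:E) ->
  L2p P Tn (fun t w => Rgl S Q g l t w * Xg Y g l w).
Proof.
move=> hX t ht; case: (eqVneq t (g%:Z + l)) => [e|ne].
  apply: (L2cellmul (fun s q => [&& s == Some g, q & t == g%:Z + l]%:R)).
  by apply: hX; rewrite -e.
rewrite (_ : (fun w => _) = (fun _ => 0)); first exact: (Lp_0 P p1_2).
by apply: funext => w; rewrite /Rgl (negbTE ne) !andbF mul0r.
Qed.

Lemma L2p_Yobs (Y : option nat -> int -> Omega -> R)
  (hYinf : forall t, t \in periods Tn -> Y None t \in Lfun P 2%:E)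
  (hYg : forall g t, Some g \in Sset -> t \in periods Tn ->
           Y (Some g) t \in Lfun P 2%:E)
  (hconv : forall g t w, Some g \in Sset -> t \in periods Tn -> t < g%:Z ->
           Y (Some g) t w = Y None t w)
  (hwin : forall g t, g \in Gtrg Sset -> t \in periods Tn ->
           - (L%:Z) <= t - g%:Z <= K%:Z) :
  L2p P Tn (Yobs S Q Y).
Proof.
apply: (@L2p_ext (Yobs S Q Y) (fun t w => Y None t w +
    \sum_(g <- Gtrg Sset) \sum_(l <- evs L K) Rgl S Q g l t w * Xg Y g l w)); last first.
  by move=> t ht w; rewrite Yobs_dec.
apply: L2p_add; first by move=> t ht; apply: hYinf.
apply: L2p_sum => g hg; apply: L2p_sum => l hl; apply: L2p_RglX => hp.
rewrite mem_Gtrg in hg.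
by apply: (Lp_sub P p1_2); [apply: hYg|apply: hYinf].
Qed.

Lemma catt_term (Y : option nat -> int -> Omega -> R)
  (hpos : forall s q, s \in Sset -> (0 < cellP P S Q s q)%E)
  (Rt : int -> int -> Omega -> R) i g l :
  three_way_demeaned P Tn S Q (Defs.Re S Q i) (Rt i) ->
  Some g \in Sset ->
  (g%:Z + l \in periods Tn -> Xg Y g l \in Lfun P 2%:E) ->
  ip P Tn (Rt i) (fun t w => Rgl S Q g l t w * Xg Y g l w) =
  CATT P S Q Y g l * ip P Tn (Rt i) (Rgl S Q g l).
Proof.
move=> hd hg hX.
have [rho Hr] := @rep_Rt Rt i hd.
rewrite Hr; last exact: L2p_RglX.
rewrite Hr; last exact: L2p_Rgl.
rewrite mulr_sumr big_seq_cond [RHS]big_seq_cond; apply: eq_bigr => t /andP[ht _].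
have pw : forall w, rho (S w) (Q w) t * Rgl S Q g l t w =
    (rho (Some g) true t * (t == g%:Z + l)%:R) * (cellb (Some g) true w)%:R.
  move=> w; rewrite /Rgl /cellb.
  case hs: (S w == Some g); last by rewrite /= !mulr0.
  move/eqP: hs => ->; case: (Q w); last by rewrite /= !mulr0.
  by rewrite /= ?eqxx /= ?mulr1.
case: (eqVneq t (g%:Z + l)) => [e|ne].
  have hX' : Xg Y g l \in Lfun P 2%:E by apply: hX; rewrite -e.
  rewrite (@EE_ext _ _ _ P _ (fun w => rho (Some g) true t * ((cellb (Some g) true w)%:R * Xg Y g l w))); last first.
    by move=> w; rewrite mulrA pw e eqxx mulr1 mulrA.
  rewrite (@EE_ext _ _ _ P (fun w => rho (S w) (Q w) t * Rgl S Q g l t w)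
     (fun w => rho (Some g) true t * (cellb (Some g) true w)%:R)); last first.
    by move=> w; rewrite pw e eqxx mulr1.
  rewrite !EE_scale//; last exact: L1cellb.
  - rewrite EE_cellb mulrCA; congr (_ * _).
    by rewrite /CATT -/(Xg Y g l) condexp_cell//; apply: hpos.
  - by rewrite (_ : (fun w => _) = (fun w => (cellb (Some g) true w)%:R * cst 1 w));
      [apply: L1cellb; exact: Lfun_cst|apply: funext => w; rewrite /= mulr1].
rewrite (@EE_ext _ _ _ P _ (fun _ => 0)); last by move=> w; rewrite mulrA pw (negbTE ne) mulr0 !mul0r.
rewrite (@EE_ext _ _ _ P (fun w => rho (S w) (Q w) t * Rgl S Q g l t w) (fun _ => 0)); last first.
  by move=> w; rewrite pw (negbTE ne) mulr0 mul0r.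
by rewrite EE_cst mulr0.
Qed.

Lemma None_in (Rt : int -> int -> Omega -> R)
  (hRt : forall e, e \in evs L K -> three_way_demeaned P Tn S Q (Defs.Re S Q e) (Rt e))
  (hU : gram P Tn L K Rt \in unitmx)
  (hwin : forall g t, g \in Gtrg Sset -> t \in periods Tn ->
           - (L%:Z) <= t - g%:Z <= K%:Z) :
  None \in Sset.
Proof.
case: (boolP (None \in Sset)) => // hN.
have hL : forall e, e \in evs L K -> L2p P Tn (Rt e).
  by move=> e he; have [? [? [? [? [? [? ?]]]]]] := @demean_facts Rt e (hRt e he).
have h0 : (0 : int) \in evs L K by rewrite mem_evs; apply/and3P; split; lia.
suff H : forall i, i \in evs L K ->
    \sum_(e <- evs L K) (e + 1)%:~R * ip P Tn (Rt i) (Rt e) = 0 :> R.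
  have := @gram_solve Rt (fun e => (e + 1)%:~R) hU hL H 0 h0.
  by rewrite add0r => /eqP; rewrite oner_eq0.
move=> i hi.
have [ai [dli [eti [hai [Ei [Oi Li]]]]]] := @demean_facts Rt i (hRt i hi).
transitivity (\sum_(e <- evs L K) (e + 1)%:~R * ip P Tn (Rt i) (Defs.Re S Q e)).
  rewrite big_seq_cond [RHS]big_seq_cond; apply: eq_bigr => e /andP[he _].
  have [ae [dle [ete [hae [Ee [Oe Le]]]]]] := @demean_facts Rt e (hRt e he).
  congr (_ * _).
  rewrite (@ip_ext _ _ _ P Tn (Rt i) (Rt e) (fun t w => Defs.Re S Q e t w - fefit S Q ae dle ete t w)); last first.
    by move=> t _ w; rewrite Ee.
  rewrite ip_sub//; [by rewrite Oi// subr0|exact: L2p_Re|exact: L2p_fefit].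
rewrite (eq_bigr (fun e => ip P Tn (Rt i) (fun t w => (e + 1)%:~R * Defs.Re S Q e t w))); last first.
  by move=> e _; rewrite ip_scale//; exact: L2p_Re.
rewrite -ip_sum//; last by move=> e _; apply: L2p_scale; exact: L2p_Re.
rewrite (@ip_ext _ _ _ P Tn (Rt i) _ (fefit S Q
   (fun w => if S w is Some g then (Q w)%:R * (1 - g%:Z)%:~R else 0)
   (fun _ _ => 0) (fun q t => q%:R * t%:~R))).
  apply: Oi; exact: (L2cell (fun s q => if s is Some g then q%:R * (1 - g%:Z)%:~R else 0)).
move=> t ht w; rewrite /Defs.Re /fefit.
have hSw := hS w.
case hs: (S w) => [g|]; last by rewrite hs (negbTE hN) in hSw.
have hg : g \in Gtrg Sset by rewrite mem_Gtrg -hs.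
rewrite (eq_bigr (fun e => (t - g%:Z == e)%:R * ((Q w)%:R * (e + 1)%:~R))); last first.
  by move=> e _; case: (t - g%:Z == e); case: (Q w); rewrite /= ?mul0r ?mulr0 ?mul1r ?mulr1.
rewrite sum_ind ?uniq_evs// addr0.
case: (boolP (t - g%:Z \in evs L K)) => hin.
  rewrite mul1r (_ : t - g%:Z + 1 = (1 - g%:Z) + t); last by lia.
  by rewrite intrD mulrDr.
have := hwin g t hg ht; move: hin; rewrite mem_evs => + /andP[h1 h2].
rewrite h1 h2 /= => /negPn/eqP e.
rewrite mul0r -mulrDr -intrD (_ : 1 - g%:Z + t = 0) ?mulr0//; lia.
Qed.

Lemma main_sec (Y : option nat -> int -> Omega -> R) (al : int -> R)
  (om : nat -> int -> int -> R)
  (hYinf : forall t, t \in periods Tn -> Y None t \in Lfun P 2%:E)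
  (hYg : forall g t, Some g \in Sset -> t \in periods Tn ->
           Y (Some g) t \in Lfun P 2%:E)
  (hconv : forall g t w, Some g \in Sset -> t \in periods Tn -> t < g%:Z ->
           Y (Some g) t w = Y None t w)
  (hwin : forall g t, g \in Gtrg Sset -> t \in periods Tn ->
           - (L%:Z) <= t - g%:Z <= K%:Z)
  (hpos : forall s q, s \in Sset -> (0 < cellP P S Q s q)%E)
  (hgram : gram_nonsingular P Tn L K S Q)
  (hpct : DDD_PCT P Tn S Q Sset Y)
  (hal : pop_coef P Tn L K S Q (Yobs S Q Y) al)
  (hom : forall g l, g \in Gtrg Sset -> l \in evs L K ->
           pop_coef P Tn L K S Q (Rgl S Q g l) (om g l)) :
  forall j, j \in evs L K ->
    al j = \sum_(g <- Gtrg Sset) \sum_(l <- evs L K) om g l j * CATT P S Q Y g l.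
Proof.
have [Rt [hRt hU]] := hgram.
have hL : forall e, e \in evs L K -> L2p P Tn (Rt e).
  by move=> e he; have [? [? [? [? [? [? ?]]]]]] := @demean_facts Rt e (hRt e he).
have hN := @None_in Rt hRt hU hwin.
have LYo := @L2p_Yobs Y hYinf hYg hconv hwin.
have LY : L2p P Tn (Y None) by move=> t ht; apply: hYinf.
have LX : forall g l, g \in Gtrg Sset ->
    (g%:Z + l \in periods Tn -> Xg Y g l \in Lfun P 2%:E).
  move=> g l hg hp; rewrite mem_Gtrg in hg.
  by apply: (Lp_sub P p1_2); [apply: hYg|apply: hYinf].
move=> j hj.
suff H : forall i, i \in evs L K ->
    \sum_(e <- evs L K) (al e - \sum_(g <- Gtrg Sset) \sum_(l <- evs L K)
        om g l e * CATT P S Q Y g l) * ip P Tn (Rt i) (Rt e) = 0.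
  have := @gram_solve Rt (fun e => al e - \sum_(g <- Gtrg Sset) \sum_(l <- evs L K)
        om g l e * CATT P S Q Y g l) hU hL H j hj.
  by move/eqP; rewrite subr_eq0 => /eqP.
move=> i hi.
have E1 := @gram_rel Rt (Yobs S Q Y) al i hRt LYo hal hi.
have E2 : forall g l, g \in Gtrg Sset -> l \in evs L K ->
    ip P Tn (Rt i) (Rgl S Q g l) = \sum_(e <- evs L K) om g l e * ip P Tn (Rt i) (Rt e).
  by move=> g l hg hl; apply: gram_rel => //; [exact: L2p_Rgl|exact: hom].
have E3 : ip P Tn (Rt i) (Yobs S Q Y) = \sum_(g <- Gtrg Sset) \sum_(l <- evs L K)
    CATT P S Q Y g l * ip P Tn (Rt i) (Rgl S Q g l).
  rewrite (@ip_ext _ _ _ P Tn (Rt i) _ (fun t w => Y None t w +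
    \sum_(g <- Gtrg Sset) \sum_(l <- evs L K) Rgl S Q g l t w * Xg Y g l w)); last first.
    by move=> t ht w; rewrite Yobs_dec.
  rewrite ip_add//; last first.
  - apply: L2p_sum => g hg; apply: L2p_sum => l hl; apply: L2p_RglX; exact: LX.
  - exact: hL.
  rewrite (@ipYinf_zero Y hYinf hN hpct hpos Rt i (hRt i hi)) add0r.
  rewrite ip_sum; [|exact: hL|by move=> g hg; apply: L2p_sum => l hl; apply: L2p_RglX; exact: LX].
  rewrite big_seq_cond [RHS]big_seq_cond; apply: eq_bigr => g /andP[hg _].
  rewrite ip_sum; [|exact: hL|by move=> l hl; apply: L2p_RglX; exact: LX].
  apply: eq_bigr => l _.
  by apply: catt_term => //; [exact: hRt|rewrite -mem_Gtrg|exact: LX].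
rewrite (eq_bigr (fun e => al e * ip P Tn (Rt i) (Rt e) -
   \sum_(g <- Gtrg Sset) \sum_(l <- evs L K)
      CATT P S Q Y g l * (om g l e * ip P Tn (Rt i) (Rt e)))); last first.
  move=> e _; rewrite mulrBl mulr_suml; congr (_ - _); apply: eq_bigr => g _.
  by rewrite mulr_suml; apply: eq_bigr => l _; ring.
rewrite sumrB -E1 E3; apply/eqP; rewrite subr_eq0; apply/eqP.
rewrite [RHS]exchange_big /= big_seq_cond [RHS]big_seq_cond; apply: eq_bigr => g /andP[hg _].
rewrite [RHS]exchange_big /= big_seq_cond [RHS]big_seq_cond; apply: eq_bigr => l /andP[hl _].
by rewrite E2// mulr_sumr.
Qed.
End Model.

Theorem mainTheorem2
  (d : measure_display) (Omega : measurableType d) (R : realType)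
  (P : probability Omega R) (T L K : nat)
  (S : Omega -> option nat) (Q : Omega -> bool)
  (Sset : seq (option nat)) (Y : option nat -> int -> Omega -> R)
  (* setup: S_i takes values in the set S, a subset of {2,...,T} u {infinity} *)
  (hSset : forall s, s \in Sset -> if s is Some g then (2 <= g <= T)%N else true)
  (hS : forall w, S w \in Sset)
  (* (S_i, Q_i) are random variables; all cells have positive probability *)
  (hcell_meas : forall s q, measurable [set w | S w = s /\ Q w = q])
  (hcell_pos : forall s q, s \in Sset -> (0 < cellP P S Q s q)%E)
  (* finite second moments of the potential outcomes *)
  (hYinf : forall t, t \in periods T -> Y None t \in Lfun P 2%:E)
  (hYg : forall g t, Some g \in Sset -> t \in periods T ->
           Y (Some g) t \in Lfun P 2%:E)
  (* convention Y_t(g) = Y_t(infinity) for t < g *)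
  (hconv : forall g t w, Some g \in Sset -> t \in periods T -> t < g%:Z ->
           Y (Some g) t w = Y None t w)
  (* the window covers all event times *)
  (hwin : forall g t, g \in Gtrg Sset -> t \in periods T ->
           - (L%:Z) <= t - g%:Z <= K%:Z)
  (* nonsingular Gram matrix of the three-way demeaned indicators *)
  (hgram : gram_nonsingular P T L K S Q)
  (* DDD parallel changes in trends *)
  (hpct : DDD_PCT P T S Q Sset Y)
  (* alpha: population coefficients of the event-study regression *)
  (al : int -> R)
  (hal : pop_coef P T L K S Q (Yobs S Q Y) al)
  (* om g l : coefficients in the regression of R_{g,l} on the same regressors,
     so that om g l j = omega^{j,*}_{g,l} *)
  (om : nat -> int -> int -> R)
  (hom : forall g l, g \in Gtrg Sset -> l \in evs L K ->
           pop_coef P T L K S Q (Rgl S Q g l) (om g l)) :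
  forall j, j \in evs L K ->
    al j = \sum_(g <- Gtrg Sset) \sum_(l <- evs L K) om g l j * CATT P S Q Y g l.
Proof.
exact: (@main_sec d Omega R P T L K S Q Sset hS hcell_meas Y al om hYinf hYg hconv hwin
  hcell_pos hgram hpct hal hom).
Qed.
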